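(* Let $(\Omega,+)$ be a group and $a,b$ subgroups. Then for $x,z\in a^\top$ and $y\in{}^\top b$ one has $\Gamma(x,a,y,b,z)\in a^\top$, and for $x,z\in{}^\top b$ and $y\in a^\top$ one has $\Gamma(x,a,y,b,z)\in{}^\top b$. That is, the maps $\Pi^+_{ab}:a^\top\times{}^\top b\times a^\top\to a^\top$ and $\Pi^-_{ab}:{}^\top b\times a^\top\times{}^\top b\to{}^\top b$, both given by $(x,y,z)\mapsto\Gamma(x,a,y,b,z)$, are well-defined.
   Context: $(\Omega,+)$ is a group written additively but not necessarily abelian. For subsets $x,y$, $x\top y$ means every $\omega$ has a unique decomposition $\omega=\xi+\eta$ with $\xi\in x,\eta\in y$; $a^\top=\{x\subseteq\Omega: a\top x\}$, ${}^\top b=\{x\subseteq\Omega: x\top b\}$. $\Gamma(x,a,y,b,z)=\{\omega:\exists\alpha\in a,\beta\in b:\ \alpha+\omega+\beta\in y,\ \alpha+\omega\in z,\ \omega+\beta\in x\}$. *)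

(* Defs.v *)
Definition is_group {T : Type} (add : T -> T -> T) (zero : T) (opp : T -> T) : Prop :=
  (forall x y z, add (add x y) z = add x (add y z)) /\
  (forall x, add zero x = x) /\ (forall x, add x zero = x) /\
  (forall x, add (opp x) x = zero) /\ (forall x, add x (opp x) = zero).

Definition is_subgroup {T : Type} (add : T -> T -> T) (zero : T) (opp : T -> T)
  (a : T -> Prop) : Prop :=
  a zero /\ (forall x y, a x -> a y -> a (add x y)) /\ (forall x, a x -> a (opp x)).

Definition top {T : Type} (add : T -> T -> T) (x y : T -> Prop) : Prop :=
  forall w : T,
    (exists xi eta, x xi /\ y eta /\ w = add xi eta) /\
    (forall xi eta xi' eta', x xi -> y eta -> x xi' -> y eta' ->
       w = add xi eta -> w = add xi' eta' -> xi = xi' /\ eta = eta').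

(* x ∈ a^⊤  iff  a ⊤ x ;   x ∈ ^⊤b  iff  x ⊤ b *)
Definition top_right {T : Type} (add : T -> T -> T) (a x : T -> Prop) : Prop := top add a x.
Definition top_left {T : Type} (add : T -> T -> T) (b x : T -> Prop) : Prop := top add x b.

Definition Gamma {T : Type} (add : T -> T -> T) (x a y b z : T -> Prop) : T -> Prop :=
  fun w => exists al be, a al /\ b be /\
    y (add (add al w) be) /\ z (add al w) /\ x (add w be).

(* Main.v *)
Require Import Defs.

Ltac grp assoc L1 L2 zl zr il ir :=
  repeat rewrite assoc;
  repeat first [ rewrite L1 | rewrite L2 | rewrite il | rewrite ir | rewrite zl | rewrite zr ];
  reflexivity.

Theorem theorem7p1 (T : Type) (add : T -> T -> T) (zero : T) (opp : T -> T)
  (a b : T -> Prop) :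
  is_group add zero opp ->
  is_subgroup add zero opp a -> is_subgroup add zero opp b ->
  (forall x y z : T -> Prop,
     top_right add a x -> top_left add b y -> top_right add a z ->
     top_right add a (Gamma add x a y b z)) /\
  (forall x y z : T -> Prop,
     top_left add b x -> top_right add a y -> top_left add b z ->
     top_left add b (Gamma add x a y b z)).
Proof.
  intros [assoc [zl [zr [il ir]]]] [a0 [aD aN]] [b0 [bD bN]].
  assert (L1 : forall x y, add (opp x) (add x y) = y).
  { intros; rewrite <- assoc, il, zl; reflexivity. }
  assert (L2 : forall x y, add x (add (opp x) y) = y).
  { intros; rewrite <- assoc, ir, zl; reflexivity. }
  assert (oppK : forall x, opp (opp x) = x).
  { intro x. rewrite <- (zr (opp (opp x))), <- (il x), <- assoc, il, zl. reflexivity. }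
  assert (cancl : forall p q r, add p q = add p r -> q = r).
  { intros p q r E. rewrite <- (L1 p q), E, L1. reflexivity. }
  assert (cancr : forall p q r, add q p = add r p -> q = r).
  { intros p q r E. rewrite <- (zr q), <- (ir p), <- assoc, E, assoc, ir, zr. reflexivity. }
  assert (cosR : forall x, top add a x -> forall w, exists al, a al /\ x (add al w)).
  { intros x Hx w. destruct (Hx w) as [[xi [eta [Ha [Hxe E]]]] _].
    exists (opp xi). split; [auto|]. rewrite E, L1. exact Hxe. }
  assert (cosRu : forall x, top add a x -> forall w al al', a al -> a al' ->
            x (add al w) -> x (add al' w) -> al = al').
  { intros x Hx w al al' Ha Ha' H1 H2.
    destruct (Hx w) as [_ U].
    destruct (U (opp al) (add al w) (opp al') (add al' w)) as [E _]; auto.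
    all: try (symmetry; rewrite L1; reflexivity).
    rewrite <- (oppK al), E, oppK; reflexivity. }
  assert (cosL : forall x, top add x b -> forall w, exists be, b be /\ x (add w be)).
  { intros x Hx w. destruct (Hx w) as [[xi [eta [Hxe [Hb E]]]] _].
    exists (opp eta). split; [auto|]. rewrite E. assert (add (add xi eta) (opp eta) = xi) as ->.
    { rewrite assoc, ir, zr; reflexivity. } exact Hxe. }
  assert (cosLu : forall x, top add x b -> forall w be be', b be -> b be' ->
            x (add w be) -> x (add w be') -> be = be').
  { intros x Hx w be be' Hb Hb' H1 H2.
    destruct (Hx w) as [_ U].
    destruct (U (add w be) (opp be) (add w be') (opp be')) as [_ E]; auto.
    all: try (symmetry; rewrite assoc, ir, zr; reflexivity).
    rewrite <- (oppK be), E, oppK; reflexivity. }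
  unfold top_right, top_left in *.
  split.
  - intros x y z Hx Hy Hz w. split.
    + destruct (cosR z Hz w) as [al0 [Ha0 Hz0]].
      destruct (cosL y Hy (add al0 w)) as [be [Hb Hy0]].
      destruct (cosR x Hx (add (add al0 w) be)) as [al1 [Ha1 Hx0]].
      exists (add (opp al0) (opp al1)), (add al1 (add al0 w)).
      split; [auto|]. split; [|grp assoc L1 L2 zl zr il ir].
      exists (opp al1), be. split; [auto|]. split; [auto|]. split; [|split].
      * assert (E : add (add (opp al1) (add al1 (add al0 w))) be = add (add al0 w) be) by grp assoc L1 L2 zl zr il ir.
        rewrite E; exact Hy0.
      * assert (E : add (opp al1) (add al1 (add al0 w)) = add al0 w) by grp assoc L1 L2 zl zr il ir.
        rewrite E; exact Hz0.
      * assert (E : add (add al1 (add al0 w)) be = add al1 (add (add al0 w) be)) by grp assoc L1 L2 zl zr il ir.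
        rewrite E; exact Hx0.
    + intros xi eta xi' eta' Ha [al [be [Hal [Hbe [Hy1 [Hz1 Hx1]]]]]]
             Ha' [al' [be' [Hal' [Hbe' [Hy2 [Hz2 Hx2]]]]]] H H'.
      assert (Hz1' : z (add (add al (opp xi)) w)).
      { assert (E : add (add al (opp xi)) w = add al eta) by (rewrite H; grp assoc L1 L2 zl zr il ir). rewrite E; exact Hz1. }
      assert (Hz2' : z (add (add al' (opp xi')) w)).
      { assert (E : add (add al' (opp xi')) w = add al' eta') by (rewrite H'; grp assoc L1 L2 zl zr il ir). rewrite E; exact Hz2. }
      assert (E1 := cosRu z Hz w _ _ (aD _ _ Hal (aN _ Ha)) (aD _ _ Hal' (aN _ Ha')) Hz1' Hz2').
      assert (Eu : add al eta = add al' eta').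
      { assert (E : add (add al (opp xi)) w = add al eta) by (rewrite H; grp assoc L1 L2 zl zr il ir).
        assert (E' : add (add al' (opp xi')) w = add al' eta') by (rewrite H'; grp assoc L1 L2 zl zr il ir).
        rewrite <- E, <- E', E1; reflexivity. }
      rewrite Eu in Hy1.
      assert (Eb := cosLu y Hy _ _ _ Hbe Hbe' Hy1 Hy2). subst be'.
      assert (Hx1' : x (add (opp al) (add (add al eta) be))).
      { assert (E : add (opp al) (add (add al eta) be) = add eta be) by grp assoc L1 L2 zl zr il ir. rewrite E; exact Hx1. }
      assert (Hx2' : x (add (opp al') (add (add al' eta') be))).
      { assert (E : add (opp al') (add (add al' eta') be) = add eta' be) by grp assoc L1 L2 zl zr il ir. rewrite E; exact Hx2. }
      rewrite Eu in Hx1'.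
      assert (Ea := cosRu x Hx _ _ _ (aN _ Hal) (aN _ Hal') Hx1' Hx2').
      assert (Ea' : al = al') by (rewrite <- (oppK al), Ea, oppK; reflexivity). subst al'.
      assert (Ee := cancl _ _ _ Eu). subst eta'.
      split; [|reflexivity]. apply (cancr eta). rewrite <- H, <- H'. reflexivity.
  - intros x y z Hx Hy Hz w. split.
    + destruct (cosL x Hx w) as [be0 [Hb0 Hx0]].
      destruct (cosR y Hy (add w be0)) as [al [Ha Hy0]].
      destruct (cosL z Hz (add al (add w be0))) as [be1 [Hb1 Hz0]].
      exists (add (add w be0) be1), (add (opp be1) (opp be0)).
      split; [|split; [auto|grp assoc L1 L2 zl zr il ir]].
      exists al, (opp be1). split; [auto|]. split; [auto|]. split; [|split].
      * assert (E : add (add al (add (add w be0) be1)) (opp be1) = add al (add w be0)) by grp assoc L1 L2 zl zr il ir.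
        rewrite E; exact Hy0.
      * assert (E : add al (add (add w be0) be1) = add (add al (add w be0)) be1) by grp assoc L1 L2 zl zr il ir.
        rewrite E; exact Hz0.
      * assert (E : add (add (add w be0) be1) (opp be1) = add w be0) by grp assoc L1 L2 zl zr il ir.
        rewrite E; exact Hx0.
    + intros xi eta xi' eta' [al [be [Hal [Hbe [Hy1 [Hz1 Hx1]]]]]] Hb
             [al' [be' [Hal' [Hbe' [Hy2 [Hz2 Hx2]]]]]] Hb' H H'.
      assert (E : add xi be = add w (add (opp eta) be)) by (rewrite H; grp assoc L1 L2 zl zr il ir).
      assert (E' : add xi' be' = add w (add (opp eta') be')) by (rewrite H'; grp assoc L1 L2 zl zr il ir).
      rewrite E in Hx1. rewrite E' in Hx2.
      assert (E1 := cosLu x Hx w _ _ (bD _ _ (bN _ Hb) Hbe) (bD _ _ (bN _ Hb') Hbe') Hx1 Hx2).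
      assert (Eu : add xi be = add xi' be') by (rewrite E, E', E1; reflexivity).
      assert (Hy1' : y (add al (add xi be))).
      { assert (F : add al (add xi be) = add (add al xi) be) by grp assoc L1 L2 zl zr il ir. rewrite F; exact Hy1. }
      assert (Hy2' : y (add al' (add xi' be'))).
      { assert (F : add al' (add xi' be') = add (add al' xi') be') by grp assoc L1 L2 zl zr il ir. rewrite F; exact Hy2. }
      rewrite Eu in Hy1'.
      assert (Ea := cosRu y Hy _ _ _ Hal Hal' Hy1' Hy2'). subst al'.
      assert (Hz1' : z (add (add al (add xi be)) (opp be))).
      { assert (F : add (add al (add xi be)) (opp be) = add al xi) by grp assoc L1 L2 zl zr il ir. rewrite F; exact Hz1. }
      assert (Hz2' : z (add (add al (add xi' be')) (opp be'))).
      { assert (F : add (add al (add xi' be')) (opp be') = add al xi') by grp assoc L1 L2 zl zr il ir. rewrite F; exact Hz2. }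
      rewrite Eu in Hz1'.
      assert (Eb := cosLu z Hz _ _ _ (bN _ Hbe) (bN _ Hbe') Hz1' Hz2').
      assert (Eb' : be = be') by (rewrite <- (oppK be), Eb, oppK; reflexivity). subst be'.
      assert (Ex := cancr _ _ _ Eu). subst xi'.
      split; [reflexivity|]. apply (cancl xi). rewrite <- H, <- H'. reflexivity.
Qed.
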